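(* Let $H'$ be the $3$-graph with vertex set $\{1,\dots,6\}$ and edge set $\{123,124,345,346,561,562,135,146,236,245\}$. A blow-up of $H'$ is a $3$-graph obtained by replacing each vertex $i$ of $H'$ by a set $V_i$ (the $V_i$ pairwise disjoint), where a triple of vertices is an edge if and only if its three vertices lie in three distinct sets $V_{i},V_{j},V_{k}$ with $ijk\in E(H')$. Then every blow-up of $H'$ on $n$ vertices has a coclique of size at least $n/2$, and of size strictly greater than $n/2$ if $n\not\equiv 0 \pmod 6$; moreover, when all $V_i$ have equal size $n/6$, the largest coclique has size exactly $n/2$.
   Context: A $3$-graph is a $3$-uniform hypergraph; $ijk$ denotes the triple $\{i,j,k\}$; a coclique is a set of vertices containing no edge. *)

(* Defs.v *)
From mathcomp Require Import all_boot.
Set Implicit Arguments. Unset Strict Implicit. Unset Printing Implicit Defensive.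

(* Vertices 1..6 of H' are encoded as 0..5 in 'I_6 (vertex i ↦ i-1). *)
Definition v (k : nat) : 'I_6 := inord k.

Definition H'edges : {set {set 'I_6}} :=
  [set [set v 0; v 1; v 2]; [set v 0; v 1; v 3];
       [set v 2; v 3; v 4]; [set v 2; v 3; v 5];
       [set v 4; v 5; v 0]; [set v 4; v 5; v 1];
       [set v 0; v 2; v 4]; [set v 0; v 3; v 5];
       [set v 1; v 2; v 5]; [set v 1; v 3; v 4]].

(* A blow-up of H' : vertex set T, with f x = i meaning x ∈ V_i (the V_i are
   the fibres of f, hence pairwise disjoint; they may be empty). *)
Definition blowup_edge (T : finType) (f : T -> 'I_6) (x y z : T) : bool :=
  [&& f x != f y, f y != f z, f x != f z & [set f x; f y; f z] \in H'edges].

Definition coclique (T : finType) (f : T -> 'I_6) (S : {set T}) : Prop :=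
  forall x y z, x \in S -> y \in S -> z \in S -> ~~ blowup_edge f x y z.

(* Main.v *)
Require Import Defs.
From mathcomp Require Import all_boot.
From mathcomp Require Import zify.
Set Implicit Arguments. Unset Strict Implicit. Unset Printing Implicit Defensive.

Lemma vE0 : v 0 = @Ordinal 6 0 isT. Proof. by apply: val_inj; rewrite /= inordK. Qed.
Lemma vE1 : v 1 = @Ordinal 6 1 isT. Proof. by apply: val_inj; rewrite /= inordK. Qed.
Lemma vE2 : v 2 = @Ordinal 6 2 isT. Proof. by apply: val_inj; rewrite /= inordK. Qed.
Lemma vE3 : v 3 = @Ordinal 6 3 isT. Proof. by apply: val_inj; rewrite /= inordK. Qed.
Lemma vE4 : v 4 = @Ordinal 6 4 isT. Proof. by apply: val_inj; rewrite /= inordK. Qed.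
Lemma vE5 : v 5 = @Ordinal 6 5 isT. Proof. by apply: val_inj; rewrite /= inordK. Qed.
Ltac vsimp := rewrite ?vE0 ?vE1 ?vE2 ?vE3 ?vE4 ?vE5.

Definition edge_in (C : {set 'I_6}) : bool :=
  [|| [&& v 0 \in C, v 1 \in C & v 2 \in C], [&& v 0 \in C, v 1 \in C & v 3 \in C],
      [&& v 2 \in C, v 3 \in C & v 4 \in C], [&& v 2 \in C, v 3 \in C & v 5 \in C],
      [&& v 4 \in C, v 5 \in C & v 0 \in C], [&& v 4 \in C, v 5 \in C & v 1 \in C],
      [&& v 0 \in C, v 2 \in C & v 4 \in C], [&& v 0 \in C, v 3 \in C & v 5 \in C],
      [&& v 1 \in C, v 2 \in C & v 5 \in C] | [&& v 1 \in C, v 3 \in C & v 4 \in C]].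

Ltac tryS1 S' k := try (rewrite (S' (v k)); last by rewrite !inE eqxx ?orbT).
Ltac tryS S' := tryS1 S' 0; tryS1 S' 1; tryS1 S' 2; tryS1 S' 3; tryS1 S' 4; tryS1 S' 5.

Lemma key (a b c : 'I_6) (C : {set 'I_6}) :
  [set a; b; c] \in H'edges -> a \in C -> b \in C -> c \in C -> edge_in C.
Proof.
move=> H ha hb hc.
have sub : [set a; b; c] \subset C.
  by apply/subsetP=> x; rewrite !inE => /orP[/orP[]|] /eqP ->.
move: H; rewrite /H'edges !inE; repeat case/orP;
move/eqP=> E; move: sub; rewrite E => /subsetP S';
rewrite /edge_in; tryS S'; rewrite /= ?orbT //.
Qed.

Lemma cocl_pre (T : finType) (f : T -> 'I_6) (C : {set 'I_6}) :
  ~~ edge_in C -> coclique f [set x | f x \in C].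
Proof.
move=> hn x y z; rewrite !inE => hx hy hz; apply/negP; case/and4P=> _ _ _ He.
by rewrite (key He hx hy hz) in hn.
Qed.

Lemma im_edge (T : finType) (f : T -> 'I_6) (S : {set T}) :
  coclique f S -> ~~ edge_in (f @: S).
Proof.
move=> hS; apply/negP; rewrite /edge_in; repeat case/orP;
case/and3P => /imsetP[x hx ex] /imsetP[y hy ey] /imsetP[z hz ez];
move/negP: (hS x y z hx hy hz); apply; rewrite /blowup_edge -ex -ey -ez /H'edges !inE eqxx /= ?orbT /=;
vsimp; by [].
Qed.

Lemma sum6 (F : 'I_6 -> nat) :
  \sum_i F i = F (v 0) + F (v 1) + F (v 2) + F (v 3) + F (v 4) + F (v 5).
Proof.
rewrite (eq_bigr (fun i : 'I_6 => F (v i))) => [|i _]; last by rewrite /v inord_val.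
rewrite -(big_mkord xpredT (fun i => F (v i))); do 6 (rewrite big_ltn //); rewrite big_geq //.
by rewrite addn0 !addnA.
Qed.

Lemma card_pre (T : finType) (f : T -> 'I_6) (C : {set 'I_6}) :
  #|[set x | f x \in C]| = \sum_(i in C) #|[set x | f x == i]|.
Proof.
rewrite -sum1_card (partition_big f (mem C)) /=; last by move=> x; rewrite inE.
apply: eq_bigr => i iC; rewrite -sum1_card; apply: eq_bigl => x.
rewrite !inE andbC; case: (f x =P i) => [->|]; by rewrite ?iC ?andbF.
Qed.

Lemma card6 (T : finType) (f : T -> 'I_6) (C : {set 'I_6}) :
  #|[set x | f x \in C]| = \sum_i (if i \in C then #|[set x | f x == i]| else 0).
Proof. by rewrite card_pre big_mkcond. Qed.

Lemma cardT6 (T : finType) (f : T -> 'I_6) :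
  #|T| = #|[set x | f x == v 0]| + #|[set x | f x == v 1]| + #|[set x | f x == v 2]|
       + #|[set x | f x == v 3]| + #|[set x | f x == v 4]| + #|[set x | f x == v 5]|.
Proof.
have -> : #|T| = #|[set x | f x \in [set: 'I_6]]|.
  by rewrite -cardsT; apply: eq_card => x; rewrite !inE.
by rewrite card6 sum6 !in_setT.
Qed.

Definition cnt (T : finType) (f : T -> 'I_6) (i : 'I_6) := #|[set x | f x == i]|.

Lemma tri (T : finType) (f : T -> 'I_6) a b c :
  ~~ edge_in [set v a; v b; v c] ->
  exists S, coclique f S /\
  #|S| = \sum_i (if i \in [set v a; v b; v c] then cnt f i else 0).
Proof. by move=> h; exists [set x | f x \in [set v a; v b; v c]]; split; [apply: cocl_pre | rewrite card6]. Qed.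

Ltac vsimpin H := rewrite ?vE0 ?vE1 ?vE2 ?vE3 ?vE4 ?vE5 in H.

Ltac mk f a b c S cS eS :=
  have [S [cS eS]] := @tri _ f a b c (ltac:(rewrite /edge_in !inE; vsimp; by []));
  rewrite sum6 in eS; cbv beta in eS.

Ltac fin e := rewrite !inE in e; vsimpin e; rewrite /= in e.

Theorem mainTheorem13 (T : finType) (f : T -> 'I_6) :
  (exists S : {set T}, coclique f S /\ #|T| <= 2 * #|S|) /\
  (#|T| %% 6 != 0 -> exists S : {set T}, coclique f S /\ #|T| < 2 * #|S|) /\
  ((forall i : 'I_6, 6 * #|[set x | f x == i]| = #|T|) ->
     (exists S : {set T}, coclique f S /\ 2 * #|S| = #|T|) /\
     (forall S : {set T}, coclique f S -> 2 * #|S| <= #|T|)).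
Proof.
mk f 0 1 4 S1 c1 e1. mk f 0 1 5 S2 c2 e2. mk f 0 2 3 S3 c3 e3.
mk f 0 2 5 S4 c4 e4. mk f 0 3 4 S5 c5 e5. mk f 1 2 3 S6 c6 e6.
mk f 1 2 4 S7 c7 e7. mk f 1 3 5 S8 c8 e8. mk f 2 4 5 S9 c9 e9.
mk f 3 4 5 S10 c10 e10.
have eT := cardT6 f.
have hsub : forall S : {set T}, #|S| <= \sum_i (if i \in f @: S then cnt f i else 0).
  move=> S; rewrite -card6; apply: subset_leq_card; apply/subsetP=> x hx.
  by rewrite inE imset_f.
have eT' : #|T| = cnt f (v 0) + cnt f (v 1) + cnt f (v 2) + cnt f (v 3) + cnt f (v 4) + cnt f (v 5) := eT.
clear eT. vsimpin eT'.
fin e1. fin e2. fin e3. fin e4. fin e5. fin e6. fin e7. fin e8. fin e9. fin e10.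
split.
  case: (leqP #|T| (2 * #|S1|)) => h1; first by exists S1.
  case: (leqP #|T| (2 * #|S2|)) => h2; first by exists S2.
  case: (leqP #|T| (2 * #|S3|)) => h3; first by exists S3.
  case: (leqP #|T| (2 * #|S4|)) => h4; first by exists S4.
  case: (leqP #|T| (2 * #|S5|)) => h5; first by exists S5.
  case: (leqP #|T| (2 * #|S6|)) => h6; first by exists S6.
  case: (leqP #|T| (2 * #|S7|)) => h7; first by exists S7.
  case: (leqP #|T| (2 * #|S8|)) => h8; first by exists S8.
  case: (leqP #|T| (2 * #|S9|)) => h9; first by exists S9.
  case: (leqP #|T| (2 * #|S10|)) => h10; first by exists S10.
  lia.
split.
  move=> hmod.
  case: (ltnP #|T| (2 * #|S1|)) => h1; first by exists S1.
  case: (ltnP #|T| (2 * #|S2|)) => h2; first by exists S2.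
  case: (ltnP #|T| (2 * #|S3|)) => h3; first by exists S3.
  case: (ltnP #|T| (2 * #|S4|)) => h4; first by exists S4.
  case: (ltnP #|T| (2 * #|S5|)) => h5; first by exists S5.
  case: (ltnP #|T| (2 * #|S6|)) => h6; first by exists S6.
  case: (ltnP #|T| (2 * #|S7|)) => h7; first by exists S7.
  case: (ltnP #|T| (2 * #|S8|)) => h8; first by exists S8.
  case: (ltnP #|T| (2 * #|S9|)) => h9; first by exists S9.
  case: (ltnP #|T| (2 * #|S10|)) => h10; first by exists S10.
  have : #|T| = 6 * cnt f (Ordinal (isT : 0 < 6)) by lia.
  move=> hT; by rewrite hT mulnC modnMl in hmod.
move=> heq.
have q0 := heq (v 0); rewrite -/(cnt f (v 0)) in q0.
have q1 := heq (v 1); rewrite -/(cnt f (v 1)) in q1.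
have q2 := heq (v 2); rewrite -/(cnt f (v 2)) in q2.
have q3 := heq (v 3); rewrite -/(cnt f (v 3)) in q3.
have q4 := heq (v 4); rewrite -/(cnt f (v 4)) in q4.
have q5 := heq (v 5); rewrite -/(cnt f (v 5)) in q5. vsimpin q0. vsimpin q1. vsimpin q2. vsimpin q3. vsimpin q4. vsimpin q5.
split.
  exists S1; split => //; lia.
move=> S hS.
have hE := im_edge hS.
have hs := hsub S; rewrite sum6 in hs; cbv beta in hs.
move: hE hs; rewrite /edge_in.
case: (v 0 \in f @: S); case: (v 1 \in f @: S); case: (v 2 \in f @: S);
case: (v 3 \in f @: S); case: (v 4 \in f @: S); case: (v 5 \in f @: S) => //= _ hs; vsimpin hs; rewrite -(heq (v 0)) -/(cnt f (v 0)); vsimp; clear -hs q0 q1 q2 q3 q4 q5; lia.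
Qed.
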